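(* Fix an instance of the data in the context and a cycle basis of the network graph $(\mathcal B,\mathcal L)$. For each cycle $C$ of the basis, with buses labeled $1,\dots,n$ in cyclic order ($n=|C|$) and oriented edges $(1,2),\dots,(n-1,n),(n,1)$, impose: (1) if $n=3$: $s_{12}c_{33}+c_{23}s_{31}+s_{23}c_{31}=0$ and $c_{12}c_{33}-c_{23}c_{31}+s_{23}s_{31}=0$; (2) if $n=4$: $s_{12}c_{34}+c_{12}s_{34}+s_{23}c_{41}+c_{23}s_{41}=0$ and $c_{12}c_{34}-s_{12}s_{34}-c_{23}c_{41}+s_{23}s_{41}=0$; (3) if $n\ge5$ is odd: auxiliary real variables $\tilde c_{1,2i},\tilde s_{1,2i}$ for $i=2,\dots,\frac{n-1}{2}$, with $\tilde c_{12}=c_{12}$, $\tilde s_{12}=s_{12}$, and constraints, for $i=2,\dots,\frac{n-1}{2}$: $\tilde c_{1,2i-2}c_{2i-1,2i}-\tilde s_{1,2i-2}s_{2i-1,2i}-\tilde c_{1,2i}c_{2i-2,2i-1}-\tilde s_{1,2i}s_{2i-2,2i-1}=0$, $\tilde s_{1,2i-2}c_{2i-1,2i}+\tilde c_{1,2i-2}s_{2i-1,2i}-\tilde s_{1,2i}c_{2i-2,2i-1}+\tilde c_{1,2i}s_{2i-2,2i-1}=0$; and $\tilde c_{1,n-1}c_{n-1,n}-\tilde s_{1,n-1}s_{n-1,n}-c_{n,1}c_{n-1,n-1}=0$, $\tilde s_{1,n-1}c_{n-1,n}+\tilde c_{1,n-1}s_{n-1,n}+s_{n,1}c_{n-1,n-1}=0$;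 $\tilde s_{1,i}^2+\tilde c_{1,i}^2=c_{11}c_{ii}$ for every even $i$ with $2\le i\le n-1$; and $c_{ij}^2+s_{ij}^2=c_{ii}c_{jj}$ for every edge $(i,j)$ of $C$; (4) if $n\ge6$ is even: auxiliary real variables $\tilde c_{1,2i},\tilde s_{1,2i}$ for $i=2,\dots,\frac n2-1$, with $\tilde c_{12}=c_{12}$, $\tilde s_{12}=s_{12}$, $\tilde c_{1,n}=c_{1,n}$, $\tilde s_{1,n}=s_{1,n}$, and constraints, for $i=2,\dots,\frac n2$: $\tilde c_{1,2i-2}c_{2i-1,2i}-\tilde s_{1,2i-2}s_{2i-1,2i}-\tilde c_{1,2i}c_{2i-2,2i-1}-\tilde s_{1,2i}s_{2i-2,2i-1}=0$, $\tilde s_{1,2i-2}c_{2i-1,2i}+\tilde c_{1,2i-2}s_{2i-1,2i}-\tilde s_{1,2i}c_{2i-2,2i-1}+\tilde c_{1,2i}s_{2i-2,2i-1}=0$; $\tilde s_{1,i}^2+\tilde c_{1,i}^2=c_{11}c_{ii}$ for every even $i$ with $2\le i\le n-1$; and $c_{ij}^2+s_{ij}^2=c_{ii}c_{jj}$ for every edge $(i,j)$ of $C$. Then: (a) (validity) for every feasible point $(p^g,q^g,c,s,\theta)$ of the OPF formulation in the context, there exist values of the auxiliary variables such that all constraints (1)–(4) hold for every cycle of the basis; and (b) every $(p^g,q^g,c,s)$ satisfying (ALT), the coupling equalities $c_{ij}^2+s_{ij}^2=c_{ii}c_{jj}$ for all lines, and constraints (1)–(4) (for some values of the auxiliary variables)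 satisfies, for each cycle $C$ in the basis, $\sum_{(i,j)\in C}\operatorname{atan2}(s_{ij},c_{ij})=2\pi k$ for some integer $k$ (sum over the oriented edges of $C$).
   Context: Data: finite bus set $\mathcal B$, line set $\mathcal L$ (unordered pairs of distinct buses; variables $c_{ij},s_{ij}$ for both orientations of each line), $\delta(i)$ the neighbors of $i$, generator set $\mathcal G\subseteq\mathcal B$, reals $G_{ij},B_{ij}$ (lines), $G_{ii},B_{ii}$ (buses), demands $p_i^d,q_i^d$, voltage bounds $0<\underline V_i\le\overline V_i$, generator bounds $p_i^{\min}\le p_i^{\max}$, $q_i^{\min}\le q_i^{\max}$ ($i\in\mathcal G$). Variables $p_i^g,q_i^g$ for $i\in\mathcal G$, with $p_i^g=q_i^g=0$ for $i\notin\mathcal G$. (ALT): $p_i^g-p_i^d=G_{ii}c_{ii}+\sum_{j\in\delta(i)}(G_{ij}c_{ij}-B_{ij}s_{ij})$, $q_i^g-q_i^d=-B_{ii}c_{ii}+\sum_{j\in\delta(i)}(-B_{ij}c_{ij}-G_{ij}s_{ij})$, $\underline V_i^2\le c_{ii}\le\overline V_i^2$ ($i\in\mathcal B$); $c_{ij}=c_{ji}$, $s_{ij}=-s_{ji}$ (lines); $p_i^{\min}\le p_i^g\le p_i^{\max}$, $q_i^{\min}\le q_i^g\le q_i^{\max}$ ($i\in\mathcal G$). OPF formulation: variables $(p^g,q^g,c,s,\theta)$ with $\theta\in\mathbb R^{\mathcal B}$ satisfying (ALT), $c_{ij}^2+s_{ij}^2=c_{ii}c_{jj}$ and $\theta_j-\theta_i=\operatorname{atan2}(s_{ij},c_{ij})$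 for every line $(i,j)$. Here $\operatorname{atan2}(y,x)\in(-\pi,\pi]$ is the angle of the point $(x,y)\neq(0,0)$. A cycle basis is a basis of the cycle space of the graph consisting of cycles. *)

(* Defs.v *)
From HB Require Import structures.
From mathcomp Require Import all_boot all_order all_algebra.
From mathcomp Require Import all_classical all_reals all_analysis.
Set Implicit Arguments. Unset Strict Implicit. Unset Printing Implicit Defensive.
Import Order.TTheory GRing.Theory Num.Theory.
Local Open Scope ring_scope.

Section OPF.
Variable R : realType.

(* atan2 y x : the angle in (-pi, pi] of the point (x, y) <> (0,0);
   the value at (0,0) (where atan2 is undefined) is fixed to 0. *)
Definition atan2 (y x : R) : R :=
  if 0 < x then atan (y / x)
  else if x < 0 then (if 0 <= y then atan (y / x) + pi else atan (y / x) - pi)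
  else if 0 < y then pi / 2
  else if y < 0 then - (pi / 2)
  else 0.

Variable Bus : finType.

(* The network is given by its lines, each with a fixed orientation:
   [ln i j] means that {i,j} is a line written (i,j).  The (undirected)
   adjacency is [adj]. *)
Definition adj (ln : rel Bus) : rel Bus := fun i j => ln i j || ln j i.

Definition lines_ok (ln : rel Bus) : Prop :=
  (forall i, ~~ ln i i) /\ (forall i j, ln i j -> ~~ ln j i).

Definition lineset (ln : rel Bus) : {set {set Bus}} :=
  [set e : {set Bus} | [exists x, exists y, ln x y && (e == [set x; y])]].

Definition is_cycle (ln : rel Bus) (p : seq Bus) : Prop :=
  [/\ uniq p, (2 < size p)%N & cycle (adj ln) p].

Definition cyc_oedges (p : seq Bus) : seq (Bus * Bus) := zip p (rot 1 p).

Definition cyc_edges (p : seq Bus) : {set {set Bus}} :=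
  [set e : {set Bus} | has (fun x => e == [set x.1; x.2]) (cyc_oedges p)].

Definition in_cycle_space (ln : rel Bus) (F : {set {set Bus}}) : Prop :=
  F \subset lineset ln /\ forall v : Bus, ~~ odd #|[set e in F | v \in e]|.

Definition gf2_sum (m : nat) (cyc : 'I_m -> seq Bus) (S : {set 'I_m})
  : {set {set Bus}} :=
  [set e : {set Bus} | odd #|[set k in S | e \in cyc_edges (cyc k)]|].

Definition cycle_basis (ln : rel Bus) (m : nat) (cyc : 'I_m -> seq Bus) : Prop :=
  [/\ forall k, is_cycle ln (cyc k),
      forall S : {set 'I_m}, gf2_sum cyc S = finset.set0 -> S = finset.set0 &
      forall F, in_cycle_space ln F -> exists S, gf2_sum cyc S = F].

(* Constraints (1)-(4) for one cycle p (buses p`_0,...,p`_(n-1) labelled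
   1,...,n), with auxiliary variables ct k = ~c_{1,k}, st k = ~s_{1,k}
   (only the values at the relevant even k matter). *)
Definition cycle_constraints (c s : Bus -> Bus -> R) (p : seq Bus)
  (ct st : nat -> R) : Prop :=
  match p with
  | [::] => True
  | x0 :: _ =>
    let n := size p in
    let V k := nth x0 p k.-1 in
    let C i j := c (V i) (V j) in
    let S i j := s (V i) (V j) in
    let rec_cons (i : nat) :=
      ct (2*i-2)%N * C (2*i-1)%N (2*i)%N - st (2*i-2)%N * S (2*i-1)%N (2*i)%N
        - ct (2*i)%N * C (2*i-2)%N (2*i-1)%N - st (2*i)%N * S (2*i-2)%N (2*i-1)%N = 0
      /\
      st (2*i-2)%N * C (2*i-1)%N (2*i)%N + ct (2*i-2)%N * S (2*i-1)%N (2*i)%N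
        - st (2*i)%N * C (2*i-2)%N (2*i-1)%N + ct (2*i)%N * S (2*i-2)%N (2*i-1)%N = 0 in
    let norm_cons :=
      forall i : nat, (2 <= i <= n - 1)%N -> ~~ odd i ->
        st i ^+ 2 + ct i ^+ 2 = C 1%N 1%N * C i i in
    let edge_cons :=
      forall e, e \in cyc_oedges p ->
        c e.1 e.2 ^+ 2 + s e.1 e.2 ^+ 2 = c e.1 e.1 * c e.2 e.2 in
    if n == 3%N then
      S 1%N 2%N * C 3%N 3%N + C 2%N 3%N * S 3%N 1%N + S 2%N 3%N * C 3%N 1%N = 0 /\
      C 1%N 2%N * C 3%N 3%N - C 2%N 3%N * C 3%N 1%N + S 2%N 3%N * S 3%N 1%N = 0
    else if n == 4%N then
      S 1%N 2%N * C 3%N 4%N + C 1%N 2%N * S 3%N 4%N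
        + S 2%N 3%N * C 4%N 1%N + C 2%N 3%N * S 4%N 1%N = 0 /\
      C 1%N 2%N * C 3%N 4%N - S 1%N 2%N * S 3%N 4%N
        - C 2%N 3%N * C 4%N 1%N + S 2%N 3%N * S 4%N 1%N = 0
    else if odd n then
      [/\ ct 2%N = C 1%N 2%N /\ st 2%N = S 1%N 2%N,
          forall i : nat, (2 <= i <= n.-1./2)%N -> rec_cons i,
          ct n.-1 * C n.-1 n - st n.-1 * S n.-1 n - C n 1%N * C n.-1 n.-1 = 0 /\
          st n.-1 * C n.-1 n + ct n.-1 * S n.-1 n + S n 1%N * C n.-1 n.-1 = 0,
          norm_cons & edge_cons]
    else
      [/\ ct 2%N = C 1%N 2%N /\ st 2%N = S 1%N 2%N,
          ct n = C 1%N n /\ st n = S 1%N n,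
          forall i : nat, (2 <= i <= n./2)%N -> rec_cons i,
          norm_cons & edge_cons]
  end.

Definition ALT (ln : rel Bus) (Gen : {set Bus}) (G B : Bus -> Bus -> R)
  (pd qd Vlo Vhi pmin pmax qmin qmax : Bus -> R)
  (pg qg : Bus -> R) (c s : Bus -> Bus -> R) : Prop :=
  [/\ forall i, pg i - pd i
        = G i i * c i i + \sum_(j | adj ln i j) (G i j * c i j - B i j * s i j),
      forall i, qg i - qd i
        = - B i i * c i i + \sum_(j | adj ln i j) (- B i j * c i j - G i j * s i j),
      forall i, Vlo i ^+ 2 <= c i i <= Vhi i ^+ 2,
      forall i j, ln i j -> c i j = c j i /\ s i j = - s j i
    & (forall i, i \in Gen -> pmin i <= pg i <= pmax i /\ qmin i <= qg i <= qmax i)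
      /\ (forall i, i \notin Gen -> pg i = 0 /\ qg i = 0)].

Definition coupling (ln : rel Bus) (c s : Bus -> Bus -> R) : Prop :=
  forall i j, ln i j -> c i j ^+ 2 + s i j ^+ 2 = c i i * c j j.

Definition OPF_feasible (ln : rel Bus) (Gen : {set Bus}) (G B : Bus -> Bus -> R)
  (pd qd Vlo Vhi pmin pmax qmin qmax : Bus -> R)
  (pg qg : Bus -> R) (c s : Bus -> Bus -> R) (theta : Bus -> R) : Prop :=
  [/\ ALT ln Gen G B pd qd Vlo Vhi pmin pmax qmin qmax pg qg c s,
      coupling ln c s &
      forall i j, ln i j -> theta j - theta i = atan2 (s i j) (c i j)].

End OPF.

(* Main.v *)
Require Import Defs.
From HB Require Import structures.
From mathcomp Require Import all_boot all_order all_algebra.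
From mathcomp Require Import all_classical all_reals all_analysis.
From mathcomp Require Import ring lra zify.
Require Import Defs.
Import Order.TTheory GRing.Theory Num.Theory.
Local Open Scope ring_scope.

Module Helpers.
Set Implicit Arguments. Unset Strict Implicit. Unset Printing Implicit Defensive.
Section Aux.
Variable R : realType.

Lemma sin_atanE (t : R) : sin (atan t) = t * cos (atan t).
Proof.
have hc : cos (atan t) != 0.
  by rewrite gt_eqF // cos_gt0_pihalf // atan_gtNpi2 atan_ltpi2.
by rewrite -{2}(atanK t) /tan mulfVK.
Qed.

Lemma atan_polar_pos (x y : R) : 0 < x ->
  x = Num.sqrt (x^+2 + y^+2) * cos (atan (y / x)) /\
  y = Num.sqrt (x^+2 + y^+2) * sin (atan (y / x)).
Proof.
move=> hx.
set t := y / x.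
have hq : 0 < Num.sqrt (1 + t ^+ 2).
  by rewrite sqrtr_gt0; apply: (lt_le_trans ltr01); rewrite lerDl sqr_ge0.
have e : x ^+ 2 + y ^+ 2 = (x * Num.sqrt (1 + t ^+ 2)) ^+ 2.
  rewrite exprMn sqr_sqrtr; last by rewrite addr_ge0 // sqr_ge0.
  rewrite /t; field; by rewrite gt_eqF.
rewrite sin_atanE cos_atan e sqrtr_sqr gtr0_norm ?mulr_gt0 //.
split; first by field; rewrite gt_eqF.
rewrite /t; field; rewrite ?gt_eqF //.
Qed.

Lemma atan2_polar (x y : R) :
  x = Num.sqrt (x^+2 + y^+2) * cos (atan2 y x) /\
  y = Num.sqrt (x^+2 + y^+2) * sin (atan2 y x).
Proof.
rewrite /atan2.
have [hx|hx] := ltP 0 x; first exact: atan_polar_pos.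
have [hx'|hx'] := ltP x 0.
  have hn : 0 < - x by rewrite oppr_gt0.
  have := @atan_polar_pos (- x) (- y) hn.
  rewrite !sqrrN invrN mulrNN => -[e1 e2].
  have ee : forall a : R, cos (a - pi) = - cos a /\ sin (a - pi) = - sin a.
    by move=> a; rewrite cosB sinB cospi sinpi; split; ring.
  have ep : forall a : R, cos (a + pi) = - cos a /\ sin (a + pi) = - sin a.
    by move=> a; rewrite cosD sinD cospi sinpi; split; ring.
  case: ifP => _.
    rewrite (ep _).1 (ep _).2 !mulrN -e1; split; first by ring.
    by rewrite -[y]opprK {1}e2 opprK.
  rewrite (ee _).1 (ee _).2 !mulrN -e1; split; first by ring.
  by rewrite -[y]opprK {1}e2 opprK.
have -> : x = 0 by apply/eqP; rewrite eq_le hx hx'.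
rewrite expr0n /= add0r sqrtr_sqr.
have [hy|hy] := ltP 0 y.
  by rewrite gtr0_norm // cos_pihalf sin_pihalf; split; ring.
have [hy'|hy'] := ltP y 0.
  rewrite ltr0_norm // cosN sinN cos_pihalf sin_pihalf; split; ring.
have -> : y = 0 by apply/eqP; rewrite eq_le hy hy'.
by rewrite normr0; split; ring.
Qed.

Lemma periodic_int (f : R -> R) (T : R) : periodic f T ->
  forall (k : int) a, f (a + k%:~R * T) = f a.
Proof.
move=> hp [n|n] a.
  by rewrite -pmulrn mulr_natl periodicn.
rewrite NegzE mulrNz mulNr.
set b := a - _.
have -> : a = b + T *+ n.+1 by rewrite /b mulr_natl; ring.
by rewrite periodicn.
Qed.

Lemma angle_2pi (x : R) : sin x = 0 -> 0 < cos x ->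
  exists z : int, x = 2 * pi * z%:~R.
Proof.
move=> hs hc.
set T := (pi : R) *+ 2.
have hT : 0 < T by rewrite pmulrn_rgt0 // pi_gt0.
set k := Num.floor (x / T).
set y := x - k%:~R * T.
have ey : x = y + k%:~R * T by rewrite /y; ring.
have sy : sin y = 0 by rewrite -hs ey periodic_int //; exact: sinD2pi.
have cy : 0 < cos y by rewrite (_ : cos y = cos x) // ey periodic_int //; exact: cosD2pi.
have := floor_itv (x / T); rewrite -/k => /andP[h1 h2].
have y0 : 0 <= y.
  rewrite /y subr_ge0 -ler_pdivlMr //.
have yT : y < T.
  rewrite ltr_pdivrMr // intrD mulrDl mul1r in h2.
  rewrite /y; lra.
have Ty : T = pi + pi by rewrite /T mulr2n.
have hpi := @pi_gt0 R.
have yz : y = 0.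
  have [ylt|yge] := ltP y pi.
    have [ypos|yle] := ltP 0 y.
      by have := sin_gt0_pi (x:=y); rewrite ypos ylt sy ltxx => /(_ isT).
    by apply/eqP; rewrite eq_le yle y0.
  have [yeq|ygt] := eqVneq y pi.
    by move: cy; rewrite yeq cospi; lra.
  have ygt' : pi < y by rewrite lt_neqAle eq_sym ygt yge.
  have := sin_gt0_pi (x := y - pi).
  rewrite subr_gt0 ygt' ltrBlDr -Ty yT => /(_ isT).
  by rewrite sinB cospi sinpi sy; lra.
exists k; rewrite ey yz add0r /T mulr2n; ring.
Qed.
Definition pmul (a b : R * R) : R * R := (a.1*b.1 - a.2*b.2, a.1*b.2 + a.2*b.1).
Definition pcj (a : R * R) : R * R := (a.1, - a.2).
Definition psc (r : R) (a : R * R) : R * R := (r * a.1, r * a.2).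
Definition nrm (a : R * R) : R := a.1 ^+ 2 + a.2 ^+ 2.

Lemma pmulA a b d : pmul (pmul a b) d = pmul a (pmul b d).
Proof. by rewrite /pmul /=; congr pair; ring. Qed.
Lemma pmulC a b : pmul a b = pmul b a.
Proof. by rewrite /pmul /=; congr pair; ring. Qed.
Lemma pmul1 a : pmul (1, 0) a = a.
Proof. by case: a => x y; rewrite /pmul /=; congr pair; ring. Qed.
Lemma pmulsc r a b : pmul (psc r a) b = psc r (pmul a b).
Proof. by rewrite /pmul /psc /=; congr pair; ring. Qed.
Lemma pcjmul a : pmul (pcj a) a = (nrm a, 0).
Proof. by rewrite /pmul /pcj /nrm /=; congr pair; ring. Qed.
Lemma nrmM a b : nrm (pmul a b) = nrm a * nrm b.
Proof. by rewrite /pmul /nrm /=; ring. Qed.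
Lemma psc_real r t : psc r (t, 0) = (r * t, 0).
Proof. by rewrite /psc /=; congr pair; ring. Qed.
Lemma pscA r q a : psc r (psc q a) = psc (r * q) a.
Proof. by rewrite /psc /=; congr pair; ring. Qed.

Definition prodp (T : Type) (f : T -> R * R) (l : seq T) : R * R :=
  foldr (fun e acc => pmul (f e) acc) (1, 0) l.

Lemma prodp_cat T f (l1 l2 : seq T) :
  prodp f (l1 ++ l2) = pmul (prodp f l1) (prodp f l2).
Proof.
elim: l1 => [|a l IH] /=; first by rewrite pmul1.
by rewrite IH pmulA.
Qed.

Lemma prodp_polar T (cf sf : T -> R) (l : seq T) :
  prodp (fun e => (cf e, sf e)) l =
  psc (\prod_(e <- l) Num.sqrt (cf e ^+ 2 + sf e ^+ 2))
      (cos (\sum_(e <- l) atan2 (sf e) (cf e)), sin (\sum_(e <- l) atan2 (sf e) (cf e))).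
Proof.
elim: l => [|a l IH] /=.
  by rewrite !big_nil cos0 sin0 /psc /=; congr pair; ring.
rewrite IH !big_cons.
move: (atan2_polar (cf a) (sf a)).
set r := Num.sqrt _; set al := atan2 _ _; move=> [e1 e2].
rewrite cosD sinD /pmul /psc /= [in X in (X, _) = _]e1 [in X in (_, X) = _]e1.
rewrite [in X in (X, _) = _]e2 [in X in (_, X) = _]e2.
congr pair; ring.
Qed.
End Aux.

Section Cyc.
Variable T : finType.

Lemma nth_rcons_lt x0 (t : seq T) x i : (i < size t)%N ->
  nth x0 (rcons t x) i = nth x0 t i.
Proof. by move=> h; rewrite nth_rcons h. Qed.

Lemma nth_cons_rcons_le x0 (t : seq T) x i : (i <= size t)%N ->
  nth x0 (x0 :: rcons t x) i = nth x0 (x0 :: t) i.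
Proof. by case: i => //= i h; rewrite nth_rcons_lt. Qed.

Lemma cycle_nth (e : rel T) x0 t : cycle e (x0 :: t) ->
  (forall k, (0 < k)%N -> (k <= size t)%N ->
     e (nth x0 (x0::t) k.-1) (nth x0 (x0::t) k)) /\
  e (nth x0 (x0::t) (size t)) x0.
Proof.
rewrite /= => /(pathP x0) H; split.
  move=> k k0 kt.
  have := H k.-1; rewrite size_rcons.
  have -> : (k.-1 < (size t).+1)%N by lia.
  move=> /(_ isT).
  rewrite nth_cons_rcons_le; last by lia.
  rewrite nth_rcons_lt; last by lia.
  by case: k k0 kt.
have := H (size t); rewrite size_rcons ltnSn => /(_ isT).
rewrite nth_rcons ltnn eqxx nth_cons_rcons_le //.
Qed.

Lemma cyc_oedgesE (x0 : T) (t : seq T) : cyc_oedges (x0 :: t) =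
  [seq (nth x0 (x0::t) k.-1, nth x0 (x0::t) k) | k <- iota 1 (size t)]
    ++ [:: (nth x0 (x0::t) (size t), x0)].
Proof.
rewrite /cyc_oedges rot1_cons.
apply: (@eq_from_nth _ (x0, x0)).
  by rewrite size_zip size_cat size_map size_iota /= size_rcons addn1 minnn.
rewrite size_zip size_rcons /= minnn => i ilt.
rewrite nth_zip /=; last by rewrite size_rcons.
rewrite nth_cat size_map size_iota nth_rcons.
case: (ltnP i (size t)) => hi.
  rewrite (nth_map 0%N); last by rewrite size_iota.
  by rewrite nth_iota // add1n.
have -> : i = size t by lia.
by rewrite subnn eqxx.
Qed.
End Cyc.

Section B.
Variable R : realType.
Variable T : finType.
Variables (c s : T -> T -> R).

Definition zf (e : T * T) : R * R := (c e.1 e.2, s e.1 e.2).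
Definition zk x0 (t : seq T) (k : nat) : R * R :=
  (c (nth x0 (x0::t) k.-1) (nth x0 (x0::t) k), s (nth x0 (x0::t) k.-1) (nth x0 (x0::t) k)).
Definition Pp x0 t (j : nat) := prodp (zk x0 t) (iota 1 j.-1).

Lemma prodp_map (A B : Type) (f : B -> R * R) (g : A -> B) l :
  prodp f (map g l) = prodp (fun x => f (g x)) l.
Proof. by elim: l => //= a l ->. Qed.

Lemma prodp1 (A : Type) (f : A -> R * R) a : prodp f [:: a] = f a.
Proof. by rewrite /= pmulC pmul1. Qed.

Lemma Pp_step x0 t k : Pp x0 t k.+2 = pmul (Pp x0 t k.+1) (zk x0 t k.+1).
Proof.
have e : (k.+2.-1 = k.+1.-1 + 1)%N by rewrite addn1.
by rewrite /Pp e iotaD prodp_cat add1n prodp1.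
Qed.

Lemma Z_split x0 t :
  prodp zf (cyc_oedges (x0 :: t)) =
  pmul (Pp x0 t (size t).+1) (c (nth x0 (x0::t) (size t)) x0, s (nth x0 (x0::t) (size t)) x0).
Proof. by rewrite cyc_oedgesE prodp_cat prodp_map prodp1. Qed.

Lemma real_pos_of_psc (Z : R * R) a u : 0 < a -> 0 < u -> psc a Z = (u, 0) ->
  exists t0, 0 < t0 /\ Z = (t0, 0).
Proof.
case: Z => x y ha hu [e1 e2].
exists (u / a); split; first by rewrite divr_gt0.
have -> : y = 0 by move/eqP: e2; rewrite mulf_eq0 gt_eqF //= => /eqP.
by rewrite -e1 [a * x]mulrC mulfK // gt_eqF.
Qed.

Lemma chain x0 t (ct st : nat -> R) (bound : nat) :
  (ct 2%N, st 2%N) = zk x0 t 1 ->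
  (forall j, (j.+2 <= bound)%N ->
     pmul (ct j.*2.+2, st j.*2.+2) (zk x0 t j.*2.+3) =
     pmul (ct j.*2.+4, st j.*2.+4) (pcj (zk x0 t j.*2.+2))) ->
  (forall j, (j.+2 <= bound)%N -> 0 < nrm (zk x0 t j.*2.+2)) ->
  forall j, (j.+1 <= bound)%N ->
    exists q, 0 < q /\ psc q (ct j.*2.+2, st j.*2.+2) = Pp x0 t j.*2.+2.
Proof.
move=> h2 hrec hpos; elim=> [|j IH] hj.
  exists 1; split => //.
  rewrite /Pp /= pmulC pmul1 -h2 /psc /=; congr pair; ring.
have [q [q0 hq]] := IH (ltnW hj).
exists (q * nrm (zk x0 t j.*2.+2)); split; first by rewrite mulr_gt0 // hpos.
rewrite doubleS Pp_step Pp_step -hq.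
set w := (ct j.*2.+2, st j.*2.+2).
set zA := zk x0 t j.*2.+2. set zB := zk x0 t j.*2.+3.
have E : pmul (pmul (psc q w) zA) zB = psc q (pmul (pmul w zB) zA).
  by rewrite /pmul /psc /=; congr pair; ring.
rewrite E hrec // pmulA pcjmul /pmul /psc /=; congr pair; ring.
Qed.
Lemma rec_pair (a1 a2 b1 b2 x y x' y' : R) :
  a1 * x - a2 * y - b1 * x' - b2 * y' = 0 ->
  a2 * x + a1 * y - b2 * x' + b1 * y' = 0 ->
  pmul (a1, a2) (x, y) = pmul (b1, b2) (pcj (x', y')).
Proof. by move=> e1 e2; rewrite /pmul /pcj /=; congr pair; lra. Qed.

Lemma fin_pair (a1 a2 x y u v D : R) :
  a1 * x - a2 * y - u * D = 0 ->
  a2 * x + a1 * y + v * D = 0 ->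
  pmul (a1, a2) (x, y) = psc D (pcj (u, v)).
Proof. by move=> e1 e2; rewrite /pmul /pcj /psc /=; congr pair; lra. Qed.

Lemma b_core x0 t (ct st : nat -> R) :
  (2 <= size t)%N ->
  (forall k, (0 < k)%N -> (k <= size t)%N -> 0 < nrm (zk x0 t k)) ->
  0 < nrm (c (nth x0 (x0::t) (size t)) x0, s (nth x0 (x0::t) (size t)) x0) ->
  (c x0 (nth x0 (x0::t) (size t)), s x0 (nth x0 (x0::t) (size t))) =
     pcj (c (nth x0 (x0::t) (size t)) x0, s (nth x0 (x0::t) (size t)) x0) ->
  (forall b, 0 < c b b) ->
  cycle_constraints c s (x0::t) ct st ->
  exists t0, 0 < t0 /\ prodp zf (cyc_oedges (x0::t)) = (t0, 0).
Proof.
move=> Hn Hpos Hposl Hsym Hdiag Hcons.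
rewrite Z_split.
have [e2|ne2] := eqVneq (size t) 2%N.
  case: t e2 Hpos Hposl Hcons {Hn Hsym} => [|a [|b [|d t]]] //= _ Hpos Hposl.
  rewrite /cycle_constraints /= => -[E1 E2].
  have p2 := Hpos 2%N isT isT; have p1 := Hpos 1%N isT isT.
  rewrite /zk /= in p1 p2.
  apply: (@real_pos_of_psc _ (c b b) (nrm (c a b, s a b) * nrm (c b x0, s b x0))).
  - exact: Hdiag.
  - exact: mulr_gt0.
  rewrite /Pp /zk /= -nrmM -pcjmul.
  have E : psc (c b b) (c x0 a, s x0 a) = pcj (pmul (c a b, s a b) (c b x0, s b x0)).
    by rewrite /psc /pcj /pmul /=; congr pair; lra.
  rewrite -E /pmul /psc /=; congr pair; ring.
have [e3|ne3] := eqVneq (size t) 3%N.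
  case: t e3 Hpos Hposl Hcons {Hn Hsym ne2} => [|a [|b [|d [|f t]]]] //= _ Hpos Hposl.
  rewrite /cycle_constraints /= => -[E1 E2].
  have p2 := Hpos 2%N isT isT; have p1 := Hpos 3%N isT isT.
  rewrite /zk /= in p1 p2.
  exists (nrm (pmul (c a b, s a b) (c d x0, s d x0))); split.
    by rewrite nrmM mulr_gt0.
  rewrite -pcjmul.
  have E : pmul (c x0 a, s x0 a) (c b d, s b d) = pcj (pmul (c a b, s a b) (c d x0, s d x0)).
    by rewrite /pcj /pmul /=; congr pair; lra.
  rewrite -E /Pp /zk /pmul /=; congr pair; ring.
move: Hcons; rewrite /cycle_constraints /=.
rewrite !eqSS (negbTE ne2) (negbTE ne3).
have h2' : forall (hA : ct 2%N = c x0 (nth x0 t 0)) (hB : st 2%N = s x0 (nth x0 t 0)),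
    (ct 2%N, st 2%N) = zk x0 t 1.
  by move=> hA hB; rewrite hA hB.
have hrec : forall bound,
  (forall i : nat, (1 < i <= bound)%N ->
      ct (2 * i - 2)%N *
      c (nth x0 (x0 :: t) (2 * i - 1).-1) (nth x0 (x0 :: t) (2 * i).-1) -
      st (2 * i - 2)%N *
      s (nth x0 (x0 :: t) (2 * i - 1).-1) (nth x0 (x0 :: t) (2 * i).-1) -
      ct (2 * i)%N *
      c (nth x0 (x0 :: t) (2 * i - 2).-1) (nth x0 (x0 :: t) (2 * i - 1).-1) -
      st (2 * i)%N *
      s (nth x0 (x0 :: t) (2 * i - 2).-1) (nth x0 (x0 :: t) (2 * i - 1).-1) = 0 /\
      st (2 * i - 2)%N *
      c (nth x0 (x0 :: t) (2 * i - 1).-1) (nth x0 (x0 :: t) (2 * i).-1) +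
      ct (2 * i - 2)%N *
      s (nth x0 (x0 :: t) (2 * i - 1).-1) (nth x0 (x0 :: t) (2 * i).-1) -
      st (2 * i)%N *
      c (nth x0 (x0 :: t) (2 * i - 2).-1) (nth x0 (x0 :: t) (2 * i - 1).-1) +
      ct (2 * i)%N *
      s (nth x0 (x0 :: t) (2 * i - 2).-1) (nth x0 (x0 :: t) (2 * i - 1).-1) = 0) ->
  forall j, (j.+2 <= bound)%N ->
     pmul (ct j.*2.+2, st j.*2.+2) (zk x0 t j.*2.+3) =
     pmul (ct j.*2.+4, st j.*2.+4) (pcj (zk x0 t j.*2.+2)).
  move=> bound H j hj.
  have := H j.+2.
  rewrite (_ : 2 * j.+2 - 1 = j.*2.+3)%N; last by lia.
  rewrite (_ : 2 * j.+2 - 2 = j.*2.+2)%N; last by lia.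
  rewrite (_ : 2 * j.+2 = j.*2.+4)%N; last by lia.
  have hc : (1 < j.+2 <= bound)%N by lia.
  move=> /(_ hc) [e1 e2].
  exact: rec_pair e1 e2.
have Pp_step' : forall j, (0 < j)%N -> Pp x0 t j.+1 = pmul (Pp x0 t j) (zk x0 t j).
  by case=> // j _; rewrite Pp_step.
set zl := (c (nth x0 (x0::t) (size t)) x0, s (nth x0 (x0::t) (size t)) x0).
case: ifP => hodd.
  move=> [[h2a h2b] Hrec0 [F1 F2] _ _].
  set m := (size t)./2 in Hrec0.
  have em : size t = m.*2.
    by rewrite /m -[in LHS](odd_double_half (size t)) (negbTE hodd).
  have m2 : (2 <= m)%N by lia.
  have hpos' : forall j, (j.+2 <= m)%N -> 0 < nrm (zk x0 t j.*2.+2).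
    by move=> j hj; apply: Hpos; lia.
  have [q [q0 hq]] := chain (h2' h2a h2b) (hrec m Hrec0) hpos' (j := m.-1) (ltac:(lia)).
  rewrite (_ : (m.-1).*2.+2 = size t)%N in hq; last by lia.
  have FP := fin_pair F1 F2.
  rewrite Pp_step' ?(ltn_trans _ Hn) // -hq.
  set w := (ct (size t), st (size t)) in FP hq *.
  set zA := zk x0 t (size t) in FP *.
  set D := c (nth x0 (x0::t) (size t).-1) (nth x0 (x0::t) (size t).-1) in FP *.
  have E : pmul (pmul (psc q w) zA) zl = psc q (pmul (pmul w zA) zl).
    by rewrite /pmul /psc /=; congr pair; ring.
  rewrite E FP pmulsc pcjmul.
  exists (q * (D * nrm zl)); split.
    by rewrite !mulr_gt0 // /D.
  by rewrite /psc /=; congr pair; ring.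
move=> [[h2a h2b] [hna hnb] Hrec0 _ _].
set m := uphalf (size t) in Hrec0.
have hodd' : odd (size t) by move/negbFE: hodd.
have em : (size t).+1 = m.*2.
  have := odd_double_half (size t); rewrite hodd' /m uphalf_half hodd' /=; lia.
have m2 : (3 <= m)%N by lia.
have hpos' : forall j, (j.+2 <= m)%N -> 0 < nrm (zk x0 t j.*2.+2).
  by move=> j hj; apply: Hpos; lia.
have [q [q0 hq]] := chain (h2' h2a h2b) (hrec m Hrec0) hpos' (j := m.-1) (ltac:(lia)).
rewrite (_ : (m.-1).*2.+2 = (size t).+1)%N in hq; last by lia.
rewrite -hq hna hnb Hsym -/zl pmulsc pcjmul.
exists (q * nrm zl); split; first by rewrite mulr_gt0.
by rewrite /psc /=; congr pair; ring.
Qed.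
End B.

Section A.
Variable R : realType.
Variable T : finType.
Variables (c s : T -> T -> R) (v C S : T -> R).

Definition Fm x y := c x y = v x * v y * (C x * C y + S x * S y) /\
                     s x y = v x * v y * (C x * S y - S x * C y).

Definition ctf x0 (t : seq T) (k : nat) : R :=
  v x0 * v (nth x0 (x0::t) k.-1) * (C x0 * C (nth x0 (x0::t) k.-1) + S x0 * S (nth x0 (x0::t) k.-1)).
Definition stf x0 (t : seq T) (k : nat) : R :=
  v x0 * v (nth x0 (x0::t) k.-1) * (C x0 * S (nth x0 (x0::t) k.-1) - S x0 * C (nth x0 (x0::t) k.-1)).

Lemma a_core x0 t :
  (2 <= size t)%N ->
  (forall k, (0 < k)%N -> (k <= size t)%N -> Fm (nth x0 (x0::t) k.-1) (nth x0 (x0::t) k)) ->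
  Fm (nth x0 (x0::t) (size t)) x0 ->
  Fm x0 (nth x0 (x0::t) (size t)) ->
  (forall e, e \in cyc_oedges (x0::t) -> Fm e.1 e.2) ->
  (forall b, c b b = v b ^+ 2 * (C b ^+ 2 + S b ^+ 2)) ->
  cycle_constraints c s (x0::t) (ctf x0 t) (stf x0 t).
Proof.
move=> Hn Hk Hl Hl' He Hd.
have edge : forall e, e \in cyc_oedges (x0::t) ->
    c e.1 e.2 ^+ 2 + s e.1 e.2 ^+ 2 = c e.1 e.1 * c e.2 e.2.
  move=> e /He [-> ->]; rewrite !Hd; ring.
have ncons : forall i : nat, (1 < i <= (size t).+1 - 1)%N -> ~~ odd i ->
    stf x0 t i ^+ 2 + ctf x0 t i ^+ 2 =
    c x0 x0 * c (nth x0 (x0 :: t) i.-1) (nth x0 (x0 :: t) i.-1).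
  by move=> i _ _; rewrite /ctf /stf !Hd; ring.
rewrite /cycle_constraints /=.
have [e2|ne2] := eqVneq (size t) 2%N.
  case: t e2 Hk Hl {Hn Hl' He edge ncons} => [|a [|b [|d t]]] //= _ Hk Hl.
  have [h1 h1'] := Hk 1%N isT isT; have [h2 h2'] := Hk 2%N isT isT.
  case: Hl => [h3 h3']. rewrite /= in h1 h1' h2 h2'.
  rewrite h1 h1' h2 h2' h3 h3' Hd; split; ring.
have [e3|ne3] := eqVneq (size t) 3%N.
  case: t e3 Hk Hl {Hn Hl' He edge ncons ne2} => [|a [|b [|d [|f t]]]] //= _ Hk Hl.
  have [h1 h1'] := Hk 1%N isT isT; have [h2 h2'] := Hk 2%N isT isT.
  have [h4 h4'] := Hk 3%N isT isT.
  case: Hl => [h3 h3']. rewrite /= in h1 h1' h2 h2' h4 h4'.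
  rewrite h1 h1' h2 h2' h3 h3' h4 h4'; split; ring.
rewrite !eqSS (negbTE ne2) (negbTE ne3).
have rec : forall i : nat, (1 < i)%N -> (2 * i <= (size t).+1)%N ->
      ctf x0 t (2 * i - 2)%N *
      c (nth x0 (x0 :: t) (2 * i - 1).-1) (nth x0 (x0 :: t) (2 * i).-1) -
      stf x0 t (2 * i - 2)%N *
      s (nth x0 (x0 :: t) (2 * i - 1).-1) (nth x0 (x0 :: t) (2 * i).-1) -
      ctf x0 t (2 * i)%N *
      c (nth x0 (x0 :: t) (2 * i - 2).-1) (nth x0 (x0 :: t) (2 * i - 1).-1) -
      stf x0 t (2 * i)%N *
      s (nth x0 (x0 :: t) (2 * i - 2).-1) (nth x0 (x0 :: t) (2 * i - 1).-1) = 0 /\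
      stf x0 t (2 * i - 2)%N *
      c (nth x0 (x0 :: t) (2 * i - 1).-1) (nth x0 (x0 :: t) (2 * i).-1) +
      ctf x0 t (2 * i - 2)%N *
      s (nth x0 (x0 :: t) (2 * i - 1).-1) (nth x0 (x0 :: t) (2 * i).-1) -
      stf x0 t (2 * i)%N *
      c (nth x0 (x0 :: t) (2 * i - 2).-1) (nth x0 (x0 :: t) (2 * i - 1).-1) +
      ctf x0 t (2 * i)%N *
      s (nth x0 (x0 :: t) (2 * i - 2).-1) (nth x0 (x0 :: t) (2 * i - 1).-1) = 0.
  move=> i hi1 hi2.
  have [a [e1 e2 e3 ha ha']] : exists a, [/\ (2*i-2 = a)%N, (2*i-1 = a.+1)%N,
      (2*i = a.+2)%N, (0 < a)%N & (a.+1 <= size t)%N].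
    by exists (2*i-2)%N; split; lia.
  rewrite e1 e2 e3.
  have [h1 h1'] := Hk a.+1 isT ha'.
  have [h2 h2'] := Hk a ha (ltnW ha').
  rewrite h1 h1' h2 h2' /ctf /stf; split; ring.
case: ifP => hodd.
  split.
  - have [h1 h1'] := Hk 1%N isT (ltnW Hn).
    by rewrite /ctf /stf h1 h1'; split; ring.
  - move=> i /andP[hi1 hi2]; apply: rec => //.
    have := odd_double_half (size t); rewrite (negbTE hodd) /=; lia.
  - have [h1 h1'] := Hk (size t) (ltac:(lia)) (leqnn _).
    case: Hl => h3 h3'.
    rewrite /ctf /stf h1 h1' h3 h3' Hd; split; ring.
  - exact: ncons.
  - exact: edge.
split.
- have [h1 h1'] := Hk 1%N isT (ltnW Hn).
  by rewrite /ctf /stf h1 h1'; split; ring.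
- case: Hl' => h3 h3'.
  by rewrite /ctf /stf h3 h3'; split; ring.
- move=> i /andP[hi1 hi2]; apply: rec => //.
  have hodd' : odd (size t) by move/negbFE: hodd.
  have := odd_double_half (size t); rewrite hodd' uphalf_half hodd' /= in hi2 *; lia.
- exact: ncons.
- exact: edge.
Qed.
End A.

End Helpers.
Import Helpers.

Theorem proposition8 (R : realType) (Bus : finType) (ln : rel Bus)
  (Gen : {set Bus}) (G B : Bus -> Bus -> R)
  (pd qd Vlo Vhi pmin pmax qmin qmax : Bus -> R)
  (Hln : lines_ok ln)
  (HV : forall i, 0 < Vlo i /\ Vlo i <= Vhi i)
  (Hgen : forall i, i \in Gen -> pmin i <= pmax i /\ qmin i <= qmax i)
  (m : nat) (cyc : 'I_m -> seq Bus) (Hbasis : cycle_basis ln cyc) :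
  (* (a) validity *)
  (forall (pg qg : Bus -> R) (c s : Bus -> Bus -> R) (theta : Bus -> R),
     OPF_feasible ln Gen G B pd qd Vlo Vhi pmin pmax qmin qmax pg qg c s theta ->
     exists ct st : 'I_m -> nat -> R,
       forall k, cycle_constraints c s (cyc k) (ct k) (st k))
  /\
  (* (b) angle consistency around each basis cycle *)
  (forall (pg qg : Bus -> R) (c s : Bus -> Bus -> R),
     ALT ln Gen G B pd qd Vlo Vhi pmin pmax qmin qmax pg qg c s ->
     coupling ln c s ->
     (exists ct st : 'I_m -> nat -> R,
        forall k, cycle_constraints c s (cyc k) (ct k) (st k)) ->
     forall k, exists z : int,
       \sum_(e <- cyc_oedges (cyc k)) atan2 (s e.1 e.2) (c e.1 e.2)
         = 2 * pi * z%:~R).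
Proof.
case: Hbasis => Hcyc _ _.
have adjC : forall x y, adj ln x y -> adj ln y x by move=> x y; rewrite /adj orbC.
have cyc_facts : forall k, exists x0 t, cyc k = x0 :: t /\ (2 <= size t)%N /\
    (forall e, e \in cyc_oedges (x0 :: t) -> adj ln e.1 e.2) /\
    (forall j, (0 < j)%N -> (j <= size t)%N ->
       adj ln (nth x0 (x0::t) j.-1) (nth x0 (x0::t) j)) /\
    adj ln (nth x0 (x0::t) (size t)) x0.
  move=> k; case: (Hcyc k) => _ hs hc.
  case E: (cyc k) hs hc => [|x0 t] //= hs hc.
  have [Hk Hl] := cycle_nth hc.
  exists x0, t; do 4?split => //.
  move=> e; rewrite cyc_oedgesE mem_cat => /orP[|].
    by move=> /mapP[j]; rewrite mem_iota => /andP[j1 j2] ->; apply: Hk; lia.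
  by rewrite inE => /eqP ->.
have cpos : forall (c : Bus -> Bus -> R), (forall i, Vlo i ^+ 2 <= c i i) ->
    forall b, 0 < c b b.
  move=> c hc b; apply: lt_le_trans (hc b).
  by rewrite exprn_gt0 //; case: (HV b).
split.
- move=> pg qg c s theta [[_ _ HVc Hsym _] Hcpl Hth].
  pose v b := Num.sqrt (c b b).
  pose C b := cos (theta b). pose S b := sin (theta b).
  have c0 := cpos c (fun i => (andP (HVc i)).1).
  have Fln : forall x y, ln x y -> Fm c s v C S x y.
    move=> x y hxy.
    have [e1 e2] := atan2_polar (c x y) (s x y).
    rewrite -(Hth _ _ hxy) (Hcpl _ _ hxy) sqrtrM ?ltW // cosB sinB in e1 e2.
    by rewrite /Fm /v /C /S {1}e1 {1}e2; split; ring.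
  have Fadj : forall x y, adj ln x y -> Fm c s v C S x y.
    move=> x y /orP[/Fln //|hyx].
    have [e1 e2] := Fln _ _ hyx; have [s1 s2] := Hsym _ _ hyx.
    have ss : s x y = - s y x by rewrite s2 opprK.
    by rewrite /Fm -s1 e1 ss e2; split; ring.
  have Hd : forall b, c b b = v b ^+ 2 * (C b ^+ 2 + S b ^+ 2).
    by move=> b; rewrite /v sqr_sqrtr ?ltW // /C /S cos2Dsin2 mulr1.
  exists (fun k => match cyc k with [::] => fun _ => 0 | x0 :: t => ctf v C S x0 t end).
  exists (fun k => match cyc k with [::] => fun _ => 0 | x0 :: t => stf v C S x0 t end).
  move=> k; have [x0 [t [E [hn [he [hk hl]]]]]] := cyc_facts k.
  rewrite E; apply: a_core => //.
  + by move=> j j0 jt; apply: Fadj; apply: hk.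
  + exact: Fadj.
  + by apply: Fadj; apply: adjC.
  + by move=> e /he; apply: Fadj.
- move=> pg qg c s [_ _ HVc Hsym _] Hcpl [ct [st Hcons]] k.
  have c0 := cpos c (fun i => (andP (HVc i)).1).
  have nadj : forall x y, adj ln x y -> 0 < nrm (c x y, s x y).
    move=> x y /orP[hxy|hyx]; rewrite /nrm /=.
      by rewrite Hcpl // mulr_gt0.
    have [s1 s2] := Hsym _ _ hyx.
    have ss : s x y = - s y x by rewrite s2 opprK.
    by rewrite -s1 ss sqrrN Hcpl // mulr_gt0.
  have psym : forall x y, adj ln x y -> (c y x, s y x) = pcj (c x y, s x y).
    move=> x y /orP[hxy|hyx]; rewrite /pcj /=.
      by have [s1 s2] := Hsym _ _ hxy; rewrite s1 s2 opprK.
    by have [s1 s2] := Hsym _ _ hyx; rewrite s1 s2.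
  have [x0 [t [E [hn [he [hk hl]]]]]] := cyc_facts k.
  have := Hcons k; rewrite E => Hc.
  have [t0 [t0p hZ]] := b_core hn (fun j j0 jt => nadj _ _ (hk j j0 jt))
    (nadj _ _ hl) (psym _ _ hl) c0 Hc.
  change (prodp (fun e : Bus * Bus => (c e.1 e.2, s e.1 e.2)) (cyc_oedges (x0 :: t)) = (t0, 0)) in hZ.
  rewrite prodp_polar /psc /= in hZ; case: hZ.
  rewrite ?E.
  set Rr := \prod_(e <- _) _; set Sg := \sum_(e <- _) _ => e1 e2.
  have Rr0 : 0 <= Rr by apply: prodr_ge0 => e _; exact: sqrtr_ge0.
  have Rrp : 0 < Rr.
    rewrite lt_neqAle Rr0 andbT; apply/eqP => h.
    by move: e1; rewrite -h mul0r => h0; move: t0p; rewrite -h0 ltxx.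
  apply: angle_2pi.
    by move/eqP: e2; rewrite mulf_eq0 gt_eqF //= => /eqP.
  by move: t0p; rewrite -e1 pmulr_rgt0.
Qed.
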